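(* Consider the two systems of ODEs for scalar functions $p(z),q(z)$: \[ \text{(I)}\quad p'''= 6pp'+3q'+zp'+2p,\qquad q'''= 12pq'+6p'p''+3p''+4zq'-2q, \] \[ \text{(II)}\quad p'''= 3pp'+3q'+zp'+2p,\qquad q'''= 12pq'+6p'q+3p''+4zq'-2q. \] Each of the systems (I) and (II) possesses formal Laurent series solutions of the form \[ p=\sum_{i=-2}^{\infty}\alpha_i(z-a)^i,\qquad q=\sum_{i=-4}^{\infty}\beta_i(z-a)^i \] depending on six arbitrary parameters.
   Context: Primes denote derivatives with respect to $z$. The parameter count includes the pole position $a$. *)

(* Defs.v *)
(* Formal Laurent series in (z - a) with coefficients in a
   numeric algebraically closed field C (e.g. the complex numbers), represented
   by their coefficient sequence  f : int -> C,  f i = coefficient of (z-a)^i. *)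
From HB Require Import structures.
From mathcomp Require Import all_boot all_order all_algebra.
Set Implicit Arguments. Unset Strict Implicit. Unset Printing Implicit Defensive.
Import Order.TTheory GRing.Theory Num.Theory.
Local Open Scope ring_scope.

Section Laurent.
Variable C : numClosedFieldType.

Definition supp_ge (N : int) (f : int -> C) : Prop := forall i : int, i < N -> f i = 0.

Definition lder (f : int -> C) : int -> C := fun n => (n + 1)%:~R * f (n + 1).

(* multiplication by z = a + (z - a) *)
Definition zmul (a : C) (f : int -> C) : int -> C := fun n => a * f n + f (n - 1).

(* Cauchy product of two Laurent series both supported on indices >= -7
   (all products appearing below are of this kind). *)
Definition lmul (f g : int -> C) : int -> C :=
  fun n => \sum_(i < (14 + absz n).+1) f (i%:Z - 7) * g (n - (i%:Z - 7)).

Definition systemI (a : C) (p q : int -> C) : Prop :=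
  forall n : int,
    lder (lder (lder p)) n =
      6 * lmul p (lder p) n + 3 * lder q n + zmul a (lder p) n + 2 * p n
  /\ lder (lder (lder q)) n =
      12 * lmul p (lder q) n + 6 * lmul (lder p) (lder (lder p)) n
      + 3 * lder (lder p) n + 4 * zmul a (lder q) n - 2 * q n.

Definition systemII (a : C) (p q : int -> C) : Prop :=
  forall n : int,
    lder (lder (lder p)) n =
      3 * lmul p (lder p) n + 3 * lder q n + zmul a (lder p) n + 2 * p n
  /\ lder (lder (lder q)) n =
      12 * lmul p (lder q) n + 6 * lmul (lder p) q n
      + 3 * lder (lder p) n + 4 * zmul a (lder q) n - 2 * q n.

Definition coef_at (p q : int -> C) (pos : bool * int) : C :=
  if pos.1 then q pos.2 else p pos.2.

(* "sys possesses formal Laurent series solutions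
     p = sum_{i>=-2} alpha_i (z-a)^i,  q = sum_{i>=-4} beta_i (z-a)^i
   (with genuine leading terms alpha_{-2} <> 0, beta_{-4} <> 0)
   depending on six arbitrary parameters":  the pole position a is arbitrary,
   and there are five coefficient positions whose values can be prescribed
   arbitrarily. *)
Definition six_parameter_laurent_family (sys : C -> (int -> C) -> (int -> C) -> Prop) : Prop :=
  exists pos : 'I_5 -> bool * int,
    forall (a : C) (c : 'I_5 -> C),
      exists p q : int -> C,
        [/\ supp_ge (-2) p /\ supp_ge (-4) q, p (-2) != 0, q (-4) != 0,
            sys a p q & (forall k : 'I_5, coef_at p q (pos k) = c k)].

End Laurent.

(* Main.v *)
Require Import Defs.
From HB Require Import structures.
From mathcomp Require Import all_boot all_order all_algebra.
From mathcomp Require Import zify ring lra.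
From Stdlib Require Import FunctionalExtensionality.
Set Implicit Arguments. Unset Strict Implicit. Unset Printing Implicit Defensive.
Import Order.TTheory GRing.Theory Num.Theory.
Local Open Scope ring_scope.

Section Bridge.
Variable C : numClosedFieldType.

Definition E (F : nat -> C) (x : int) : C :=
  match x with Posz k => F k | Negz _ => 0 end.

Lemma E_eq F x k : x = k%:Z -> E F x = F k.
Proof. by move->. Qed.

Lemma E_neg F x : x < 0 -> E F x = 0.
Proof. by case: x. Qed.

Lemma E_ext F F' (M : nat) x : (forall j, (j < M)%N -> F j = F' j) -> x < M%:Z -> E F x = E F' x.
Proof. case: x => //= k H Hk; apply: H; by rewrite -ltz_nat. Qed.

Lemma lder_E F (A : nat) :
  lder (fun i => E F (i + A%:Z)) =
  (fun i => E (fun k => (k%:R - A%:R) * F k) (i + (A.+1)%:Z)).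
Proof.
apply: functional_extensionality => i; rewrite /lder.
have -> : i + 1 + A%:Z = i + (A.+1)%:Z by lia.
case Hx: (i + (A.+1)%:Z) => [k|k] /=; last by rewrite mulr0.
congr (_ * _).
have -> : i + 1 = k%:Z - A%:Z by lia.
by rewrite intrB.
Qed.

Lemma lmul_E F G (A B : nat) n : (A <= 7)%N -> (B <= 7)%N ->
  lmul (fun i => E F (i + A%:Z)) (fun i => E G (i + B%:Z)) n =
  E (fun N => \sum_(s < N.+1) F s * G (N - s)%N) (n + (A + B)%N%:Z).
Proof.
move=> HA HB; rewrite /lmul.
case HN: (n + (A + B)%N%:Z) => [N|N] /=.
- rewrite -(big_mkord xpredT (fun i : nat => E F (i%:Z - 7 + A%:Z) * E G (n - (i%:Z - 7) + B%:Z))).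
  rewrite (big_cat_nat _ (n:=(7 - A)%N)) //=; last by lia.
  rewrite [X in _ + X](big_cat_nat _ (n:=(7 - A + N.+1)%N)) //=; try lia.
  rewrite big1_seq ?add0r; last first.
    move=> i /andP[_]; rewrite mem_index_iota => /andP[_ Hi].
    by rewrite (E_neg F) ?mul0r //; lia.
  rewrite [X in _ + X]big1_seq ?addr0; last first.
    move=> i /andP[_]; rewrite mem_index_iota => /andP[Hi _].
    by rewrite (E_neg G) ?mulr0 //; lia.
  rewrite -{1}[(7 - A)%N]add0n big_addn.
  have -> : (7 - A + N.+1 - (7 - A) = N.+1)%N by lia.
  rewrite big_mkord; apply: eq_bigr => i _.
  rewrite (E_eq F (k := i)); last by lia.
  rewrite (E_eq G (k := (N - i)%N)) //.
  have := ltn_ord i; lia.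
- apply: big1 => i _.
  case: (ltnP i (7 - A)) => Hi.
    by rewrite (E_neg F) ?mul0r //; lia.
  by rewrite (E_neg G) ?mulr0 //; lia.
Qed.


Section Level.
Variables (a : C) (w : nat -> C * C).

Definition uu k := (w k).1.
Definition vv k := (w k).2.
Definition pp := fun i : int => E uu (i + (2%N)%:Z).
Definition qq := fun i : int => E vv (i + (4%N)%:Z).
Definition G1 k := (k%:R - (2%N)%:R) * uu k.
Definition G2 k := (k%:R - (3%N)%:R) * G1 k.
Definition G3 k := (k%:R - (4%N)%:R) * G2 k.
Definition K1 k := (k%:R - (4%N)%:R) * vv k.
Definition K2 k := (k%:R - (5%N)%:R) * K1 k.
Definition K3 k := (k%:R - (6%N)%:R) * K2 k.
Definition conv (F G : nat -> C) (N : nat) := \sum_(s < N.+1) F s * G (N - s)%N.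

Definition EPn (cp : C) (m : nat) : C :=
  G3 m - cp * conv uu G1 m - 3 * K1 m - a * E G1 (m%:Z - 2) - E G1 (m%:Z - 3)
  - 2 * E uu (m%:Z - 3).

Definition EQn (sysI : bool) (m : nat) : C :=
  K3 m - 12 * conv uu K1 m - 6 * (if sysI then conv G1 G2 m else conv G1 vv m)
  - 3 * E G2 (m%:Z - 3) - 4 * (a * E K1 (m%:Z - 2) + E K1 (m%:Z - 3))
  + 2 * E vv (m%:Z - 3).

Lemma lder_pp : lder pp = fun i => E G1 (i + (3%N)%:Z).
Proof. exact: lder_E. Qed.
Lemma lder2_pp : lder (lder pp) = fun i => E G2 (i + (4%N)%:Z).
Proof. by rewrite lder_pp lder_E. Qed.
Lemma lder3_pp : lder (lder (lder pp)) = fun i => E G3 (i + (5%N)%:Z).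
Proof. by rewrite lder2_pp lder_E. Qed.
Lemma lder_qq : lder qq = fun i => E K1 (i + (5%N)%:Z).
Proof. exact: lder_E. Qed.
Lemma lder2_qq : lder (lder qq) = fun i => E K2 (i + (6%N)%:Z).
Proof. by rewrite lder_qq lder_E. Qed.
Lemma lder3_qq : lder (lder (lder qq)) = fun i => E K3 (i + (7%N)%:Z).
Proof. by rewrite lder2_qq lder_E. Qed.

Lemma levelP (cp : C) n :
  lder (lder (lder pp)) n -
    (cp * lmul pp (lder pp) n + 3 * lder qq n + zmul a (lder pp) n + 2 * pp n)
  = E (EPn cp) (n + (5%N)%:Z).
Proof.
rewrite lder3_pp lder_qq lder_pp /pp lmul_E // /zmul.
case HN: (n + (5%N)%:Z) => [m|m] /=.
  have -> : n + (3%N)%:Z = m%:Z - 2 by lia.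
  have -> : n - 1 + (3%N)%:Z = m%:Z - 3 by lia.
  have -> : n + (2%N)%:Z = m%:Z - 3 by lia.
  rewrite /EPn /conv; ring.
- rewrite !(E_neg G1) ?(E_neg uu); try lia.
  ring.
Qed.

Lemma levelQ (sysI : bool) n :
  lder (lder (lder qq)) n -
    (12 * lmul pp (lder qq) n
     + 6 * (if sysI then lmul (lder pp) (lder (lder pp)) n else lmul (lder pp) qq n)
     + 3 * lder (lder pp) n + 4 * zmul a (lder qq) n - 2 * qq n)
  = E (EQn sysI) (n + (7%N)%:Z).
Proof.
rewrite lder3_qq lder2_pp lder_qq lder_pp /pp /qq !lmul_E // /zmul.
case HN: (n + (7%N)%:Z) => [m|m] /=.
  have -> : n + (4%N)%:Z = m%:Z - 3 by lia.
  have -> : n + (5%N)%:Z = m%:Z - 2 by lia.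
  have -> : n - 1 + (5%N)%:Z = m%:Z - 3 by lia.
  rewrite /EQn /conv; case: sysI; ring.
- rewrite !(E_neg G2) ?(E_neg K1) ?(E_neg vv); try lia.
  case: sysI; ring.
Qed.

End Level.
End Bridge.

Section Rec.
Variable C : numClosedFieldType.
Variable step : nat -> (nat -> C * C) -> C * C.
Hypothesis step_ext : forall m w w', (forall j, (j < m)%N -> w j = w' j) -> step m w = step m w'.

Fixpoint pre (k : nat) : nat -> C * C :=
  match k with
  | 0 => fun _ => (0, 0)
  | k'.+1 => fun i => if i == k' then step k' (pre k') else pre k' i
  end.

Definition sq m := step m (pre m).

Lemma pre_sq k i : (i < k)%N -> pre k i = sq i.
Proof.
elim: k i => // k IH i Hi /=.
case: eqP => [->//|ne]; apply: IH; lia.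
Qed.

Lemma sq_fix m : sq m = step m sq.
Proof. rewrite /sq; apply: step_ext => j Hj; exact: pre_sq. Qed.
End Rec.

Section Extract.
Variable C : numClosedFieldType.
Variables (a : C) (w : nat -> C * C).

Definition sigP (cp : C) k := \sum_(s < k.+1) uu w s.+1 * G1 w (k.+2 - s.+1).
Definition RP (cp : C) k :=
  cp * sigP cp k + a * G1 w k + E (G1 w) (k%:Z - 1) + 2 * E (uu w) (k%:Z - 1).
Definition RQ (sysI : bool) k :=
  12 * (\sum_(s < k.+1) uu w s.+1 * K1 w (k.+2 - s.+1))
  + 6 * (if sysI then \sum_(s < k.+1) G1 w s.+1 * G2 w (k.+2 - s.+1)
         else \sum_(s < k.+1) G1 w s.+1 * vv w (k.+2 - s.+1))
  + 3 * E (G2 w) (k%:Z - 1) + 4 * (a * K1 w k + E (K1 w) (k%:Z - 1))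
  - 2 * E (vv w) (k%:Z - 1).

Lemma conv_peel (F G : nat -> C) k : conv F G k.+2 =
  F 0 * G k.+2 + \sum_(s < k.+1) F s.+1 * G (k.+2 - s.+1)%N + F k.+2 * G 0.
Proof.
rewrite /conv big_ord_recl big_ord_recr /= subn0 subnn.
by rewrite addrA.
Qed.

Variables (u0 v0 : C).
Hypothesis w0 : w 0 = (u0, v0).

Definition A11 (cp m : C) := (m - 4) * (m - 3) * (m - 2) - cp * u0 * (m - 2) + 2 * cp * u0.
Definition A12 (m : C) := - 3 * (m - 4).
Definition A21 (sysI : bool) (m : C) :=
  if sysI then 48 * v0 + 12 * u0 * (m - 3) * (m - 2) - 36 * u0 * (m - 2)
  else 48 * v0 - 6 * v0 * (m - 2).
Definition A22 (sysI : bool) (m : C) :=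
  if sysI then (m - 6) * (m - 5) * (m - 4) - 12 * u0 * (m - 4)
  else (m - 6) * (m - 5) * (m - 4) - 12 * u0 * (m - 4) + 12 * u0.

Lemma extractP cp k :
  EPn a w cp k.+2 = A11 cp (k.+2)%:R * uu w k.+2 + A12 (k.+2)%:R * vv w k.+2 - RP cp k.
Proof.
rewrite /EPn conv_peel /RP /sigP /A11 /A12.
rewrite (E_eq (G1 w) (k:=k)); last by lia.
have -> : (k.+2)%:Z - 3 = k%:Z - 1 by lia.
rewrite /G3 /G2 /G1 /K1 /uu /vv w0 /=.
ring.
Qed.

Lemma extractQ sysI k :
  EQn a w sysI k.+2 = A21 sysI (k.+2)%:R * uu w k.+2 + A22 sysI (k.+2)%:R * vv w k.+2 - RQ sysI k.
Proof.
rewrite /EQn !conv_peel /RQ /A21 /A22.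
rewrite (E_eq (K1 w) (k:=k)); last by lia.
have -> : (k.+2)%:Z - 3 = k%:Z - 1 by lia.
case: sysI; rewrite /K3 /K2 /K1 /G2 /G1 /uu /vv w0 /=; ring.
Qed.

End Extract.



Section Gen.
Variable C : numClosedFieldType.

Lemma E_m1 (F : nat -> C) : E F (0%:Z - 1) = 0.
Proof. by []. Qed.
Lemma E_pred (F : nat -> C) k : E F (k.+1%:Z - 1) = F k.
Proof. apply: E_eq; lia. Qed.

Lemma RP_ext a (w w' : nat -> C * C) cp k :
  (forall j, (j < k.+2)%N -> w j = w' j) -> RP a w cp k = RP a w' cp k.
Proof.
move=> H; rewrite /RP /sigP /G1 /uu.
congr (_ * _ + _ * (_ * _) + _ + _ * _).
- apply: eq_bigr => i _; rewrite !H //; have := ltn_ord i; lia.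
- by rewrite H.
- apply: (E_ext (M := k.+2)); last by lia.
  by move=> j Hj; rewrite H.
- apply: (E_ext (M := k.+2)); last by lia.
  by move=> j Hj; rewrite H.
Qed.

Lemma RQ_ext a (w w' : nat -> C * C) b k :
  (forall j, (j < k.+2)%N -> w j = w' j) -> RQ a w b k = RQ a w' b k.
Proof.
move=> H; rewrite /RQ /G2 /G1 /K1 /uu /vv.
have HE : forall F : nat -> C * C -> C, E (fun j => F j (w j)) (k%:Z - 1) = E (fun j => F j (w' j)) (k%:Z - 1).
  move=> F; apply: (E_ext (M := k.+2)); last by lia.
  by move=> j Hj; rewrite H.
rewrite (HE (fun j x => (j%:R - (3%N)%:R) * ((j%:R - (2%N)%:R) * x.1))).
rewrite (HE (fun j x => (j%:R - (4%N)%:R) * x.2)) (HE (fun j x => x.2)) H //.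
congr (12 * _ + 6 * _ + _ + _ - _).
- apply: eq_bigr => i _; rewrite !H //; have := ltn_ord i; lia.
- case: b; apply: eq_bigr => i _; rewrite !H //; have := ltn_ord i; lia.
Qed.
End Gen.



Lemma solve2 (C : numClosedFieldType) (x11 x12 x21 x22 rp rq : C) : x11 * x22 - x12 * x21 != 0 ->
 x11 * ((x22 * rp - x12 * rq) / (x11 * x22 - x12 * x21)) + x12 * ((x11 * rq - x21 * rp) / (x11 * x22 - x12 * x21)) - rp = 0 /\
 x21 * ((x22 * rp - x12 * rq) / (x11 * x22 - x12 * x21)) + x22 * ((x11 * rq - x21 * rp) / (x11 * x22 - x12 * x21)) - rq = 0.
Proof. by move=> H; split; field. Qed.

Section SysI.
Variable C : numClosedFieldType.
Variables (a t1 t2 t3 t4 t5 : C).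

Definition detI (m : C) := (m - 4) ^+ 2 * (m + 1) * (m - 3) * (m - 6) * (m - 8).

Definition stepI (m : nat) (w : nat -> C * C) : C * C :=
  match m with
  | 0 => (1, 1)
  | 1 => (0, 0)
  | k.+2 =>
    let rp := RP a w 6 k in let rq := RQ a w true k in let mR : C := (k.+2)%:R in
    if k == 1 then ((rp - 3 * t1) / 6, t1)
    else if k == 2 then (t2, t3)
    else if k == 4 then ((rp + 6 * t4) / 12, t4)
    else if k == 6 then ((rp + 12 * t5) / 96, t5)
    else ((A22 1 true mR * rp - A12 mR * rq) / detI mR,
          (A11 1 6 mR * rq - A21 1 1 true mR * rp) / detI mR)
  end.

Lemma stepI_ext m w w' : (forall j, (j < m)%N -> w j = w' j) -> stepI m w = stepI m w'.
Proof.
case: m => [|[|k]] //= H.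
by rewrite (RP_ext _ _ H) (RQ_ext _ _ H).
Qed.

Let s := sq stepI.
Lemma sI m : s m = stepI m s.
Proof. exact: sq_fix stepI_ext m. Qed.

Lemma sI0 : s 0 = (1, 1). Proof. by rewrite sI. Qed.
Lemma sI1 : s 1 = (0, 0). Proof. by rewrite sI. Qed.

Ltac expand := rewrite ?big_ord_recr ?big_ord0 /= ?subSS ?subn0 ?subnn /G2 /G1 /K1 /uu /vv.

Lemma RPI0 : RP a s 6 0 = (-2) * a.
Proof. rewrite /RP /sigP; expand; rewrite ?sI0 ?sI1 /=; by field. Qed.
Lemma RQI0 : RQ a s true 0 = (-16) * a.
Proof. rewrite /RQ; expand; rewrite ?sI0 ?sI1 /=; by field. Qed.
Lemma sI2 : s 2 = ((-1 / 3) * a, (1 / 3) * a).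
Proof. rewrite sI /= ?RPI0 ?RQI0 /A11 /A12 /A21 /A22 /detI; congr pair; by field. Qed.
Lemma RPI1 : RP a s 6 1 = 0.
Proof. rewrite /RP /sigP; expand; rewrite ?sI0 ?sI1 ?sI2 /=; by field. Qed.
Lemma RQI1 : RQ a s true 1 = 0.
Proof. rewrite /RQ; expand; rewrite ?sI0 ?sI1 ?sI2 /=; by field. Qed.
Lemma sI3 : s 3 = ((-1 / 2) * t1, (1) * t1).
Proof. rewrite sI /= ?RPI1 ?RQI1 /A11 /A12 /A21 /A22 /detI; congr pair; by field. Qed.
Lemma RPI2 : RP a s 6 2 = 0.
Proof. rewrite /RP /sigP; expand; rewrite ?sI0 ?sI1 ?sI2 ?sI3 /=; by field. Qed.
Lemma RQI2 : RQ a s true 2 = 0.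
Proof. rewrite /RQ; expand; rewrite ?sI0 ?sI1 ?sI2 ?sI3 /=; by field. Qed.
Lemma sI4 : s 4 = ((1) * t2, (1) * t3).
Proof. rewrite sI /= ?RPI2 ?RQI2 /A11 /A12 /A21 /A22 /detI; congr pair; by field. Qed.
Lemma RPI3 : RP a s 6 3 = (-2 / 3) * a + (1 / 2) * a * t1.
Proof. rewrite /RP /sigP; expand; rewrite ?sI0 ?sI1 ?sI2 ?sI3 ?sI4 /=; by field. Qed.
Lemma RQI3 : RQ a s true 3 = (-10 / 3) * a + (4) * a * t1.
Proof. rewrite /RQ; expand; rewrite ?sI0 ?sI1 ?sI2 ?sI3 ?sI4 /=; by field. Qed.
Lemma sI5 : s 5 = ((-1 / 18) * a + (1 / 6) * a * t1, (2 / 9) * a + (-1 / 6) * a * t1).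
Proof. rewrite sI /= ?RPI3 ?RQI3 /A11 /A12 /A21 /A22 /detI; congr pair; by field. Qed.
Lemma RPI4 : RP a s 6 4 = (-3 / 2) * t1 + (3 / 2) * t1 ^+ 2 + (-2) * a * t2.
Proof. rewrite /RP /sigP; expand; rewrite ?sI0 ?sI1 ?sI2 ?sI3 ?sI4 ?sI5 /=; by field. Qed.
Lemma RQI4 : RQ a s true 4 = (-6) * t1 + (6) * t1 ^+ 2 + (-8) * a * t2.
Proof. rewrite /RQ; expand; rewrite ?sI0 ?sI1 ?sI2 ?sI3 ?sI4 ?sI5 /=; by field. Qed.
Lemma sI6 : s 6 = ((1 / 2) * t4 + (-1 / 8) * t1 + (1 / 8) * t1 ^+ 2 + (-1 / 6) * a * t2, (1) * t4).
Proof. rewrite sI /= ?RPI4 ?RQI4 /A11 /A12 /A21 /A22 /detI; congr pair; by field. Qed.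
Lemma RPI5 : RP a s 6 5 = (4) * t2 + (-9) * t1 * t2 + (1 / 6) * a ^+ 2 + (-1 / 2) * a ^+ 2 * t1.
Proof. rewrite /RP /sigP; expand; rewrite ?sI0 ?sI1 ?sI2 ?sI3 ?sI4 ?sI5 ?sI6 /=; by field. Qed.
Lemma RQI5 : RQ a s true 5 = (-2) * t3 + (6) * t2 + (-18) * t1 * t2 + (4 / 9) * a ^+ 2 + (-4 / 3) * a ^+ 2 * t1.
Proof. rewrite /RQ; expand; rewrite ?sI0 ?sI1 ?sI2 ?sI3 ?sI4 ?sI5 ?sI6 /=; by field. Qed.
Lemma sI7 : s 7 = ((1 / 16) * t3 + (11 / 48) * t2 + (-3 / 8) * t1 * t2 + (1 / 288) * a ^+ 2 + (-1 / 96) * a ^+ 2 * t1, (7 / 24) * t3 + (5 / 8) * t2 + (-3 / 4) * t1 * t2 + (-1 / 432) * a ^+ 2 + (1 / 144) * a ^+ 2 * t1).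
Proof. rewrite sI /= ?RPI5 ?RQI5 /A11 /A12 /A21 /A22 /detI; congr pair; by field. Qed.
Lemma RPI6 : RP a s 6 6 = (12) * t2 ^+ 2 + (-5 / 18) * a + (-2) * a * t4 + (2) * a * t1 + (-5 / 2) * a * t1 ^+ 2 + (2 / 3) * a ^+ 2 * t2.
Proof. rewrite /RP /sigP; expand; rewrite ?sI0 ?sI1 ?sI2 ?sI3 ?sI4 ?sI5 ?sI6 ?sI7 /=; by field. Qed.
Lemma RQI6 : RQ a s true 6 = (24) * t2 ^+ 2 + (-5 / 9) * a + (-4) * a * t4 + (4) * a * t1 + (-5) * a * t1 ^+ 2 + (4 / 3) * a ^+ 2 * t2.
Proof. rewrite /RQ; expand; rewrite ?sI0 ?sI1 ?sI2 ?sI3 ?sI4 ?sI5 ?sI6 ?sI7 /=; by field. Qed.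
Lemma sI8 : s 8 = ((1 / 8) * t5 + (1 / 8) * t2 ^+ 2 + (-5 / 1728) * a + (-1 / 48) * a * t4 + (1 / 48) * a * t1 + (-5 / 192) * a * t1 ^+ 2 + (1 / 144) * a ^+ 2 * t2, (1) * t5).
Proof. rewrite sI /= ?RPI6 ?RQI6 /A11 /A12 /A21 /A22 /detI; congr pair; by field. Qed.

Lemma detI_eq m : detI m = A11 1 6 m * A22 1 true m - A12 m * A21 1 1 true m.
Proof. rewrite /detI /A11 /A22 /A12 /A21; ring. Qed.

Lemma detI_neq0 k : k != 1 -> k != 2 -> k != 4 -> k != 6 -> detI (k.+2)%:R != 0.
Proof.
move=> h1 h2 h4 h6; rewrite /detI.
rewrite !mulf_neq0 ?expf_neq0 // ?natr1 ?pnatr_eq0 // subr_eq0 eqr_nat; lia.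
Qed.

Lemma resI m : EPn a s 6 m = 0 /\ EQn a s true m = 0.
Proof.
case: m => [|[|k]].
- rewrite /EPn /EQn /conv ?big_ord_recr !big_ord0 /= ?subnn ?subn0 /G3 /G2 /G1 /K3 /K2 /K1 /uu /vv sI0 /=.
  split; ring.
- rewrite /EPn /EQn /conv ?big_ord_recr !big_ord0 /= ?subnn ?subn0 ?subSS /G3 /G2 /G1 /K3 /K2 /K1 /uu /vv sI0 sI1 /=.
  split; ring.
- rewrite (@extractP C a s 1 1 sI0) (@extractQ C a s 1 1 sI0) /uu /vv [s k.+2]sI /=.
  case: (eqVneq k 1) => [->|n1].
    by rewrite /= RPI1 RQI1 /A11 /A12 /A21 /A22; split; field.
  case: (eqVneq k 2) => [->|n2].
    by rewrite /= RPI2 RQI2 /A11 /A12 /A21 /A22; split; field.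
  case: (eqVneq k 4) => [->|n4].
    by rewrite /= RPI4 RQI4 /A11 /A12 /A21 /A22; split; field.
  case: (eqVneq k 6) => [->|n6].
    by rewrite /= RPI6 RQI6 /A11 /A12 /A21 /A22; split; field.
  have HD := detI_neq0 n1 n2 n4 n6.
  move: HD; rewrite /= detI_eq /A11 /A12 /A21 /A22 /=.
  move: (RP a s 6 k) (RQ a s true k) ((k.+2)%:R : C) => rp rq x HD.
  split; field; apply: (contra _ HD); move/eqP=> H; apply/eqP; rewrite -H; ring.
Qed.


Lemma E0 (F : nat -> C) x : (forall m, F m = 0) -> E F x = 0.
Proof. by case: x => //= m; apply. Qed.

Lemma solI : [/\ supp_ge (-2) (pp s) /\ supp_ge (-4) (qq s), pp s (-2) != 0, qq s (-4) != 0,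
   systemI a (pp s) (qq s) &
   [/\ qq s (-1) = t1, pp s 2 = t2, qq s 0 = t3, qq s 2 = t4 & qq s 4 = t5]].
Proof.
split.
- split => i Hi; rewrite /pp /qq E_neg //; lia.
- by rewrite /pp (E_eq _ (k:=0)) // /uu sI0 oner_neq0.
- by rewrite /qq (E_eq _ (k:=0)) // /vv sI0 oner_neq0.
- move=> n; split.
  + apply/eqP; rewrite -subr_eq0; apply/eqP.
    rewrite (levelP a s 6 n); apply: E0 => m; exact: (resI m).1.
  + apply/eqP; rewrite -subr_eq0; apply/eqP.
    rewrite (levelQ a s true n); apply: E0 => m; exact: (resI m).2.
- split.
  + by rewrite /qq (E_eq _ (k:=3)) // /vv sI3 /= mul1r.
  + by rewrite /pp (E_eq _ (k:=4)) // /uu sI4 /= mul1r.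
  + by rewrite /qq (E_eq _ (k:=4)) // /vv sI4 /= mul1r.
  + by rewrite /qq (E_eq _ (k:=6)) // /vv sI6 /= mul1r.
  + by rewrite /qq (E_eq _ (k:=8)) // /vv sI8 /= mul1r.
Qed.

End SysI.

Lemma famI (C : numClosedFieldType) : six_parameter_laurent_family (@systemI C).
Proof.
exists (fun k : 'I_5 => nth (true, 0%:Z) [:: (true, -1); (false, 2%:Z); (true, 0%:Z); (true, 2%:Z); (true, 4%:Z)] k).
move=> a c.
have [H1 H2 H3 H4 [c1 c2 c3 c4 c5]] :=
  solI a (c ord0) (c (inord 1)) (c (inord 2)) (c (inord 3)) (c (inord 4)).
do 2 eexists; split; [exact: H1|exact: H2|exact: H3|exact: H4|].
case=> [[|[|[|[|[|//]]]]] Hk]; rewrite /coef_at /=.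
- by rewrite c1; congr c; apply: val_inj.
- by rewrite c2; congr c; apply: val_inj; rewrite /= inordK.
- by rewrite c3; congr c; apply: val_inj; rewrite /= inordK.
- by rewrite c4; congr c; apply: val_inj; rewrite /= inordK.
- by rewrite c5; congr c; apply: val_inj; rewrite /= inordK.
Qed.



Section SysII.
Variable C : numClosedFieldType.
Variables (a t1 t2 t3 t4 t5 : C).

Definition detII (m : C) := (m - 4) * (m - 10) * (m - 6) * (m + 1) * (m - 2) * (m - 3).

Definition stepII (m : nat) (w : nat -> C * C) : C * C :=
  match m with
  | 0 => (2, 2)
  | 1 => (0, 0)
  | k.+2 =>
    let rp := RP a w 3 k in let rq := RQ a w false k in let mR : C := (k.+2)%:R in
    if k == 0 then ((rp - 6 * t1) / 12, t1)
    else if k == 1 then ((rp - 3 * t2) / 6, t2)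
    else if k == 2 then ((rq - 24 * t3) / 72, t3)
    else if k == 4 then ((rp + 6 * t4) / 12, t4)
    else if k == 8 then ((rp + 18 * t5) / 300, t5)
    else ((A22 2 false mR * rp - A12 mR * rq) / detII mR,
          (A11 2 3 mR * rq - A21 2 2 false mR * rp) / detII mR)
  end.

Lemma stepII_ext m w w' : (forall j, (j < m)%N -> w j = w' j) -> stepII m w = stepII m w'.
Proof.
case: m => [|[|k]] //= H.
by rewrite (RP_ext _ _ H) (RQ_ext _ _ H).
Qed.

Let s := sq stepII.
Lemma sII m : s m = stepII m s.
Proof. exact: sq_fix stepII_ext m. Qed.

Lemma sII0 : s 0 = (2, 2). Proof. by rewrite sII. Qed.
Lemma sII1 : s 1 = (0, 0). Proof. by rewrite sII. Qed.

Ltac expand2 := rewrite ?big_ord_recr ?big_ord0 /= ?subSS ?subn0 ?subnn /G2 /G1 /K1 /uu /vv.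

Lemma RPII0 : RP a s 3 0 = (-4) * a.
Proof. rewrite /RP /sigP; expand2; rewrite ?sII0 ?sII1 /=; by field. Qed.
Lemma RQII0 : RQ a s false 0 = (-32) * a.
Proof. rewrite /RQ; expand2; rewrite ?sII0 ?sII1 /=; by field. Qed.
Lemma sII2 : s 2 = ((-1 / 2) * t1 + (-1 / 3) * a, (1) * t1).
Proof. rewrite sII /= ?RPII0 ?RQII0 /A11 /A12 /A21 /A22 /detII; congr pair; by field. Qed.
Lemma RPII1 : RP a s 3 1 = 0.
Proof. rewrite /RP /sigP; expand2; rewrite ?sII0 ?sII1 ?sII2 /=; by field. Qed.
Lemma RQII1 : RQ a s false 1 = 0.
Proof. rewrite /RQ; expand2; rewrite ?sII0 ?sII1 ?sII2 /=; by field. Qed.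
Lemma sII3 : s 3 = ((-1 / 2) * t2, (1) * t2).
Proof. rewrite sII /= ?RPII1 ?RQII1 /A11 /A12 /A21 /A22 /detII; congr pair; by field. Qed.
Lemma RPII2 : RP a s 3 2 = 0.
Proof. rewrite /RP /sigP; expand2; rewrite ?sII0 ?sII1 ?sII2 ?sII3 /=; by field. Qed.
Lemma RQII2 : RQ a s false 2 = (12) * t1 ^+ 2.
Proof. rewrite /RQ; expand2; rewrite ?sII0 ?sII1 ?sII2 ?sII3 /=; by field. Qed.
Lemma sII4 : s 4 = ((-1 / 3) * t3 + (1 / 6) * t1 ^+ 2, (1) * t3).
Proof. rewrite sII /= ?RPII2 ?RQII2 /A11 /A12 /A21 /A22 /detII; congr pair; by field. Qed.
Lemma RPII3 : RP a s 3 3 = (-1) * t1 + (3 / 4) * t1 * t2 + (-2 / 3) * a.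
Proof. rewrite /RP /sigP; expand2; rewrite ?sII0 ?sII1 ?sII2 ?sII3 ?sII4 /=; by field. Qed.
Lemma RQII3 : RQ a s false 3 = (-10) * t1 + (15) * t1 * t2.
Proof. rewrite /RQ; expand2; rewrite ?sII0 ?sII1 ?sII2 ?sII3 ?sII4 /=; by field. Qed.
Lemma sII5 : s 5 = ((-1 / 6) * t1 + (1 / 4) * t1 * t2, (1 / 3) * t1 + (-1 / 4) * t1 * t2 + (2 / 9) * a).
Proof. rewrite sII /= ?RPII3 ?RQII3 /A11 /A12 /A21 /A22 /detII; congr pair; by field. Qed.
Lemma RPII4 : RP a s 3 4 = (-3 / 2) * t2 + (3 / 4) * t2 ^+ 2 + (1) * t1 * t3 + (-1 / 2) * t1 ^+ 3.
Proof. rewrite /RP /sigP; expand2; rewrite ?sII0 ?sII1 ?sII2 ?sII3 ?sII4 ?sII5 /=; by field. Qed.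
Lemma RQII4 : RQ a s false 4 = (-6) * t2 + (3) * t2 ^+ 2 + (4) * t1 * t3 + (-2) * t1 ^+ 3.
Proof. rewrite /RQ; expand2; rewrite ?sII0 ?sII1 ?sII2 ?sII3 ?sII4 ?sII5 /=; by field. Qed.
Lemma sII6 : s 6 = ((1 / 2) * t4 + (-1 / 8) * t2 + (1 / 16) * t2 ^+ 2 + (1 / 12) * t1 * t3 + (-1 / 24) * t1 ^+ 3, (1) * t4).
Proof. rewrite sII /= ?RPII4 ?RQII4 /A11 /A12 /A21 /A22 /detII; congr pair; by field. Qed.
Lemma RPII5 : RP a s 3 5 = (-4 / 3) * t3 + (3 / 2) * t2 * t3 + (17 / 12) * t1 ^+ 2 + (-15 / 8) * t1 ^+ 2 * t2.
Proof. rewrite /RP /sigP; expand2; rewrite ?sII0 ?sII1 ?sII2 ?sII3 ?sII4 ?sII5 ?sII6 /=; by field. Qed.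
Lemma RQII5 : RQ a s false 5 = (-4) * t3 + (-3) * t2 * t3 + (-4 / 3) * a * t1.
Proof. rewrite /RQ; expand2; rewrite ?sII0 ?sII1 ?sII2 ?sII3 ?sII4 ?sII5 ?sII6 /=; by field. Qed.
Lemma sII7 : s 7 = ((-1 / 72) * t3 + (1 / 16) * t2 * t3 + (119 / 2880) * t1 ^+ 2 + (-7 / 128) * t1 ^+ 2 * t2 + (1 / 120) * a * t1, (1 / 12) * t3 + (1 / 8) * t2 * t3 + (17 / 480) * t1 ^+ 2 + (-3 / 64) * t1 ^+ 2 * t2 + (7 / 180) * a * t1).
Proof. rewrite sII /= ?RPII5 ?RQII5 /A11 /A12 /A21 /A22 /detII; congr pair; by field. Qed.
Lemma RPII6 : RP a s 3 6 = (2 / 3) * t3 ^+ 2 + (-5 / 6) * t1 + (-3) * t1 * t4 + (3) * t1 * t2 + (-15 / 8) * t1 * t2 ^+ 2 + (-7 / 6) * t1 ^+ 2 * t3 + (5 / 12) * t1 ^+ 4.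
Proof. rewrite /RP /sigP; expand2; rewrite ?sII0 ?sII1 ?sII2 ?sII3 ?sII4 ?sII5 ?sII6 ?sII7 /=; by field. Qed.
Lemma RQII6 : RQ a s false 6 = (-4) * t3 ^+ 2 + (-7 / 3) * t1 + (-12) * t1 * t4 + (15 / 4) * t1 * t2 ^+ 2 + (2) * t1 ^+ 2 * t3 + (4 / 9) * a + (-2) * a * t2.
Proof. rewrite /RQ; expand2; rewrite ?sII0 ?sII1 ?sII2 ?sII3 ?sII4 ?sII5 ?sII6 ?sII7 /=; by field. Qed.
Lemma sII8 : s 8 = ((1 / 54) * t3 ^+ 2 + (-1 / 360) * t1 + (1 / 30) * t1 * t2 + (-1 / 32) * t1 * t2 ^+ 2 + (-1 / 54) * t1 ^+ 2 * t3 + (1 / 216) * t1 ^+ 4 + (-1 / 810) * a + (1 / 180) * a * t2, (5 / 54) * t3 ^+ 2 + (17 / 360) * t1 + (1 / 4) * t1 * t4 + (1 / 60) * t1 * t2 + (-3 / 32) * t1 * t2 ^+ 2 + (-11 / 216) * t1 ^+ 2 * t3 + (1 / 432) * t1 ^+ 4 + (-4 / 405) * a + (2 / 45) * a * t2).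
Proof. rewrite sII /= ?RPII6 ?RQII6 /A11 /A12 /A21 /A22 /detII; congr pair; by field. Qed.
Lemma RPII7 : RP a s 3 7 = (3) * t4 + (-3 / 4) * t2 + (-15 / 4) * t2 * t4 + (21 / 16) * t2 ^+ 2 + (-15 / 32) * t2 ^+ 3 + (23 / 16) * t1 * t3 + (-75 / 32) * t1 * t2 * t3 + (-125 / 128) * t1 ^+ 3 + (345 / 256) * t1 ^+ 3 * t2 + (-1 / 16) * a * t1 ^+ 2.
Proof. rewrite /RP /sigP; expand2; rewrite ?sII0 ?sII1 ?sII2 ?sII3 ?sII4 ?sII5 ?sII6 ?sII7 ?sII8 /=; by field. Qed.
Lemma RQII7 : RQ a s false 7 = (24) * t4 + (-9 / 2) * t2 + (-9) * t2 * t4 + (3 / 4) * t2 ^+ 2 + (3 / 4) * t2 ^+ 3 + (-17 / 4) * t1 * t3 + (45 / 8) * t1 * t2 * t3 + (-89 / 160) * t1 ^+ 3 + (-63 / 64) * t1 ^+ 3 * t2 + (-16 / 9) * a * t3 + (43 / 180) * a * t1 ^+ 2.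
Proof. rewrite /RQ; expand2; rewrite ?sII0 ?sII1 ?sII2 ?sII3 ?sII4 ?sII5 ?sII6 ?sII7 ?sII8 /=; by field. Qed.
Lemma sII9 : s 9 = ((-1 / 25) * t4 + (9 / 1400) * t2 + (1 / 175) * t2 ^+ 2 + (-1 / 224) * t2 ^+ 3 + (11 / 600) * t1 * t3 + (-3 / 112) * t1 * t2 * t3 + (-143 / (33 * 1000 + 600)) * t1 ^+ 3 + (9 / 896) * t1 ^+ 3 * t2 + (4 / 945) * a * t3 + (-1 / 1080) * a * t1 ^+ 2, (-17 / 25) * t4 + (89 / 700) * t2 + (1 / 4) * t2 * t4 + (-53 / 2800) * t2 ^+ 2 + (-5 / 224) * t2 ^+ 3 + (149 / 1200) * t1 * t3 + (-37 / 224) * t1 * t2 * t3 + (943 / (67 * 1000 + 200)) * t1 ^+ 3 + (55 / 1792) * t1 ^+ 3 * t2 + (16 / 315) * a * t3 + (-1 / 144) * a * t1 ^+ 2).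
Proof. rewrite sII /= ?RPII7 ?RQII7 /A11 /A12 /A21 /A22 /detII; congr pair; by field. Qed.
Lemma RPII8 : RP a s 3 8 = (-7 / 72) * t3 + (-3) * t3 * t4 + (21 / 16) * t2 * t3 + (-15 / 16) * t2 ^+ 2 * t3 + (-2 / 3) * t1 * t3 ^+ 2 + (325 / 576) * t1 ^+ 2 + (3 / 2) * t1 ^+ 2 * t4 + (-279 / 128) * t1 ^+ 2 * t2 + (195 / 128) * t1 ^+ 2 * t2 ^+ 2 + (2 / 3) * t1 ^+ 3 * t3 + (-1 / 6) * t1 ^+ 5 + (5 / 72) * a * t1 + (-1 / 8) * a * t1 * t2.
Proof. rewrite /RP /sigP; expand2; rewrite ?sII0 ?sII1 ?sII2 ?sII3 ?sII4 ?sII5 ?sII6 ?sII7 ?sII8 ?sII9 /=; by field. Qed.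
Lemma RQII8 : RQ a s false 8 = 0.
Proof. rewrite /RQ; expand2; rewrite ?sII0 ?sII1 ?sII2 ?sII3 ?sII4 ?sII5 ?sII6 ?sII7 ?sII8 ?sII9 /=; by field. Qed.
Lemma sII10 : s 10 = ((3 / 50) * t5 + (-7 / (21 * 1000 + 600)) * t3 + (-1 / 100) * t3 * t4 + (7 / 1600) * t2 * t3 + (-1 / 320) * t2 ^+ 2 * t3 + (-1 / 450) * t1 * t3 ^+ 2 + (13 / 6912) * t1 ^+ 2 + (1 / 200) * t1 ^+ 2 * t4 + (-93 / (12 * 1000 + 800)) * t1 ^+ 2 * t2 + (13 / 2560) * t1 ^+ 2 * t2 ^+ 2 + (1 / 450) * t1 ^+ 3 * t3 + (-1 / 1800) * t1 ^+ 5 + (1 / 4320) * a * t1 + (-1 / 2400) * a * t1 * t2, (1) * t5).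
Proof. rewrite sII /= ?RPII8 ?RQII8 /A11 /A12 /A21 /A22 /detII; congr pair; by field. Qed.

Lemma detII_eq m : detII m = A11 2 3 m * A22 2 false m - A12 m * A21 2 2 false m.
Proof. rewrite /detII /A11 /A22 /A12 /A21; ring. Qed.

Lemma detII_neq0 k : k != 0 -> k != 1 -> k != 2 -> k != 4 -> k != 8 -> detII (k.+2)%:R != 0.
Proof.
move=> h0 h1 h2 h4 h8; rewrite /detII.
rewrite !mulf_neq0 // ?natr1 ?pnatr_eq0 // subr_eq0 eqr_nat; lia.
Qed.

Lemma resII m : EPn a s 3 m = 0 /\ EQn a s false m = 0.
Proof.
case: m => [|[|k]].
- rewrite /EPn /EQn /conv ?big_ord_recr !big_ord0 /= ?subnn ?subn0 /G3 /G2 /G1 /K3 /K2 /K1 /uu /vv sII0 /=.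
  split; ring.
- rewrite /EPn /EQn /conv ?big_ord_recr !big_ord0 /= ?subnn ?subn0 ?subSS /G3 /G2 /G1 /K3 /K2 /K1 /uu /vv sII0 sII1 /=.
  split; ring.
- rewrite (@extractP C a s 2 2 sII0) (@extractQ C a s 2 2 sII0) /uu /vv [s k.+2]sII /=.
  case: (eqVneq k 0) => [->|n0].
    by rewrite /= RPII0 RQII0 /A11 /A12 /A21 /A22; split; field.
  case: (eqVneq k 1) => [->|n1].
    by rewrite /= RPII1 RQII1 /A11 /A12 /A21 /A22; split; field.
  case: (eqVneq k 2) => [->|n2].
    by rewrite /= RPII2 RQII2 /A11 /A12 /A21 /A22; split; field.
  case: (eqVneq k 4) => [->|n4].
    by rewrite /= RPII4 RQII4 /A11 /A12 /A21 /A22; split; field.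
  case: (eqVneq k 8) => [->|n8].
    by rewrite /= RPII8 RQII8 /A11 /A12 /A21 /A22; split; field.
  have HD := detII_neq0 n0 n1 n2 n4 n8.
  move: HD; rewrite /= detII_eq /A11 /A12 /A21 /A22 /=.
  move: (RP a s 3 k) (RQ a s false k) ((k.+2)%:R : C) => rp rq x HD.
  split; field; apply: (contra _ HD); move/eqP=> H; apply/eqP; rewrite -H; ring.
Qed.

Lemma E0' (F : nat -> C) x : (forall m, F m = 0) -> E F x = 0.
Proof. by case: x => //= m; apply. Qed.

Lemma solII : [/\ supp_ge (-2) (pp s) /\ supp_ge (-4) (qq s), pp s (-2) != 0, qq s (-4) != 0,
   systemII a (pp s) (qq s) &
   [/\ qq s (-2) = t1, qq s (-1) = t2, qq s 0 = t3, qq s 2 = t4 & qq s 6 = t5]].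
Proof.
split.
- split => i Hi; rewrite /pp /qq E_neg //; lia.
- by rewrite /pp (E_eq _ (k:=0)) // /uu sII0 pnatr_eq0.
- by rewrite /qq (E_eq _ (k:=0)) // /vv sII0 pnatr_eq0.
- move=> n; split.
  + apply/eqP; rewrite -subr_eq0; apply/eqP.
    rewrite (levelP a s 3 n); apply: E0' => m; exact: (resII m).1.
  + apply/eqP; rewrite -subr_eq0; apply/eqP.
    rewrite (levelQ a s false n); apply: E0' => m; exact: (resII m).2.
- split.
  + by rewrite /qq (E_eq _ (k:=2)) // /vv sII2 /= mul1r.
  + by rewrite /qq (E_eq _ (k:=3)) // /vv sII3 /= mul1r.
  + by rewrite /qq (E_eq _ (k:=4)) // /vv sII4 /= mul1r.
  + by rewrite /qq (E_eq _ (k:=6)) // /vv sII6 /= mul1r.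
  + by rewrite /qq (E_eq _ (k:=10)) // /vv sII10 /= mul1r.
Qed.

End SysII.

Lemma famII (C : numClosedFieldType) : six_parameter_laurent_family (@systemII C).
Proof.
exists (fun k : 'I_5 => nth (true, 0%:Z) [:: (true, -2); (true, -1); (true, 0%:Z); (true, 2%:Z); (true, 6%:Z)] k).
move=> a c.
have [H1 H2 H3 H4 [c1 c2 c3 c4 c5]] :=
  solII a (c ord0) (c (inord 1)) (c (inord 2)) (c (inord 3)) (c (inord 4)).
do 2 eexists; split; [exact: H1|exact: H2|exact: H3|exact: H4|].
case=> [[|[|[|[|[|//]]]]] Hk]; rewrite /coef_at /=.
- by rewrite c1; congr c; apply: val_inj.
- by rewrite c2; congr c; apply: val_inj; rewrite /= inordK.
- by rewrite c3; congr c; apply: val_inj; rewrite /= inordK.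
- by rewrite c4; congr c; apply: val_inj; rewrite /= inordK.
- by rewrite c5; congr c; apply: val_inj; rewrite /= inordK.
Qed.


Theorem proposition2 (C : numClosedFieldType) :
  six_parameter_laurent_family (@systemI C) /\
  six_parameter_laurent_family (@systemII C).
Proof. split; [exact: famI | exact: famII]. Qed.
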